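(* Let $(F,<_F)$ and $(G,<_G)$ be ordered groups and let $\prec$ be the ordering of $F*G$ described in the context. Then the kernel of the canonical homomorphism $\alpha\colon F*G\to F\times G$, $\alpha(f_1g_1\cdots f_kg_k)=(f_1\cdots f_k,g_1\cdots g_k)$, is a convex subset of $(F*G,\prec)$.
   Context: A subset $C$ of an ordered group $(H,<)$ is convex if $c<h<c'$ with $c,c'\in C$ implies $h\in C$. Construction of $\prec$: order $F\times G$ lexicographically ($(f,g)<(f',g')$ iff $f<_Ff'$, or $f=f'$ and $g<_Gg'$); in $R=\mathbb{Z}(F\times G)$ call a nonzero element positive if the coefficient of its largest group element is a positive integer. Let $\rho\colon F*G\to M_2(R[t])$ be the homomorphism with $\rho(f)=\begin{pmatrix} f&(f-1)t\\0&1\end{pmatrix}$, $\rho(g)=\begin{pmatrix}1&0\\(g-1)t&g\end{pmatrix}$; it is injective. Order matrix positions $(1,1)$, $(2,2)$, then the off-diagonal ones in a fixed order. A nonzero $M=\sum_iM_it^i$ is positive if for the least $n$ with $M_n\ne0$ the first nonzero entry of $M_n$ is positive in $R$. Set $x\prec y$ iff $\rho(y)-\rho(x)$ is positive. *)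

(* Defs.v *)
From mathcomp Require Import all_boot all_order all_algebra.
Set Implicit Arguments. Unset Strict Implicit. Unset Printing Implicit Defensive.
Import Order.TTheory GRing.Theory Num.Theory.
Local Open Scope ring_scope.

Record ogroup := OGroup {
  og_car :> eqType;
  og_mul : og_car -> og_car -> og_car;
  og_one : og_car;
  og_inv : og_car -> og_car;
  og_lt  : rel og_car;
  og_mulA : forall x y z, og_mul x (og_mul y z) = og_mul (og_mul x y) z;
  og_mul1 : forall x, og_mul og_one x = x;
  og_mulV : forall x, og_mul (og_inv x) x = og_one;
  og_ltirr : forall x, ~~ og_lt x x;
  og_lttr : forall x y z, og_lt x y -> og_lt y z -> og_lt x z;
  og_lttot : forall x y, x != y -> og_lt x y || og_lt y x;
  og_ltmull : forall x y z, og_lt x y -> og_lt (og_mul z x) (og_mul z y);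
  og_ltmulr : forall x y z, og_lt x y -> og_lt (og_mul x z) (og_mul y z)
}.

Section FreeProduct.
Variables F G : ogroup.

(* Elements of F*G: reduced words over the alphabet F + G. *)
Definition letter_ok (l : F + G) : bool :=
  match l with inl f => f != (@og_one F) | inr g => g != (@og_one G) end.
Definition same_side (a b : F + G) : bool :=
  match a, b with inl _, inl _ => true | inr _, inr _ => true | _, _ => false end.
Definition reduced (w : seq (F + G)) : bool :=
  all letter_ok w && sorted (fun a b => ~~ same_side a b) w.

Definition alphaF (w : seq (F + G)) : F :=
  foldr ((@og_mul F)) ((@og_one F)) (pmap (fun l => if l is inl f then Some f else None) w).
Definition alphaG (w : seq (F + G)) : G :=
  foldr ((@og_mul G)) ((@og_one G)) (pmap (fun l => if l is inr g then Some g else None) w).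
Definition in_ker_alpha (w : seq (F + G)) : Prop :=
  alphaF w = (@og_one F) /\ alphaG w = (@og_one G).

(* Elements of R[t], R = Z(F x G): finite formal sums  sum c * t^i * (f,g). *)
Definition FG := (F * G)%type.
Definition poly := seq (int * (nat * FG)).
Definition pmul (p q : poly) : poly :=
  [seq (a.1 * b.1, ((a.2.1 + b.2.1)%N,
        ((@og_mul F) a.2.2.1 b.2.2.1, (@og_mul G) a.2.2.2 b.2.2.2))) | a <- p, b <- q].
Definition padd (p q : poly) : poly := p ++ q.
Definition popp (p : poly) : poly := [seq (- a.1, a.2) | a <- p].
Definition pcoef (p : poly) (n : nat) (x : FG) : int :=
  \sum_(a <- p | a.2 == (n, x)) a.1.

Definition pconst (c : int) (x : FG) : poly := [:: (c, (0%N, x))].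
Definition ptx (c : int) (x : FG) : poly := [:: (c, (1%N, x))].
Definition one_FG : FG := ((@og_one F), (@og_one G)).

Record mat := Mat { m11 : poly; m12 : poly; m21 : poly; m22 : poly }.
Definition matmul (A B : mat) : mat :=
  Mat (padd (pmul (m11 A) (m11 B)) (pmul (m12 A) (m21 B)))
      (padd (pmul (m11 A) (m12 B)) (pmul (m12 A) (m22 B)))
      (padd (pmul (m21 A) (m11 B)) (pmul (m22 A) (m21 B)))
      (padd (pmul (m21 A) (m12 B)) (pmul (m22 A) (m22 B))).
Definition matsub (A B : mat) : mat :=
  Mat (padd (m11 A) (popp (m11 B))) (padd (m12 A) (popp (m12 B)))
      (padd (m21 A) (popp (m21 B))) (padd (m22 A) (popp (m22 B))).
Definition matone : mat := Mat (pconst 1 one_FG) [::] [::] (pconst 1 one_FG).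

(* rho(f) = [[f, (f-1)t],[0,1]],  rho(g) = [[1,0],[(g-1)t, g]] *)
Definition rho_letter (l : F + G) : mat :=
  match l with
  | inl f => Mat (pconst 1 (f, (@og_one G)))
                 (ptx 1 (f, (@og_one G)) ++ ptx (-1) one_FG)
                 [::] (pconst 1 one_FG)
  | inr g => Mat (pconst 1 one_FG) [::]
                 (ptx 1 ((@og_one F), g) ++ ptx (-1) one_FG)
                 (pconst 1 ((@og_one F), g))
  end.
Definition rho (w : seq (F + G)) : mat := foldr matmul matone (map rho_letter w).

Definition lexlt (x y : FG) : bool :=
  og_lt x.1 y.1 || ((x.1 == y.1) && og_lt x.2 y.2).

(* positivity in R = Z(F x G), for an element given by its coefficient function:
   nonzero and the coefficient of its largest group element is positive *)
Definition R_zero (r : FG -> int) : Prop := forall x, r x = 0.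
Definition R_pos (r : FG -> int) : Prop :=
  exists x, 0 < r x /\ forall y, lexlt x y -> r y = 0.

Fixpoint first_nonzero_pos (l : seq (FG -> int)) : Prop :=
  match l with
  | [::] => False
  | r :: l' => R_pos r \/ (R_zero r /\ first_nonzero_pos l')
  end.

Definition entries (off : bool) (M : mat) (n : nat) : seq (FG -> int) :=
  [:: pcoef (m11 M) n; pcoef (m22 M) n] ++
  (if off then [:: pcoef (m12 M) n; pcoef (m21 M) n]
          else [:: pcoef (m21 M) n; pcoef (m12 M) n]).

Definition mat_zero_at (M : mat) (n : nat) : Prop :=
  forall x, pcoef (m11 M) n x = 0 /\ pcoef (m12 M) n x = 0 /\
            pcoef (m21 M) n x = 0 /\ pcoef (m22 M) n x = 0.

Definition mat_pos (off : bool) (M : mat) : Prop :=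
  exists n, (forall m, (m < n)%N -> mat_zero_at M m) /\
            first_nonzero_pos (entries off M n).

Definition prec (off : bool) (x y : seq (F + G)) : Prop :=
  mat_pos off (matsub (rho y) (rho x)).

Definition convex_in_FP (off : bool) (C : seq (F + G) -> Prop) : Prop :=
  forall c h c', reduced c -> reduced h -> reduced c' -> C c -> C c' ->
    prec off c h -> prec off h c' -> C h.

End FreeProduct.

(* Main.v *)
Require Import Defs.
From mathcomp Require Import all_boot all_order all_algebra.
Set Implicit Arguments. Unset Strict Implicit. Unset Printing Implicit Defensive.
Import Order.TTheory GRing.Theory Num.Theory.
Local Open Scope ring_scope.

Section Aux.
Variables F G : ogroup.

Definition d0 (p : Defs.poly F G) : Defs.poly F G := [seq a <- p | a.2.1 == 0%N].

Lemma pmul_nil (p : Defs.poly F G) : pmul p [::] = [::].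
Proof. by elim: p. Qed.

Lemma d0_pmul (p q : Defs.poly F G) : d0 (pmul p q) = pmul (d0 p) (d0 q).
Proof.
elim: p => [|a p IH] //=.
rewrite /d0 /pmul /= filter_cat.
rewrite /d0 /pmul in IH; rewrite IH.
case: ifP => Ha /=.
  congr (_ ++ _); rewrite filter_map; congr map; apply: eq_filter => b /=.
  by rewrite (eqP Ha) add0n.
rewrite filter_map (@eq_filter _ _ pred0) ?filter_pred0 // => b /=.
by rewrite addn_eq0 Ha.
Qed.

Lemma pcoef_d0 (p : Defs.poly F G) x : pcoef p 0 x = pcoef (d0 p) 0 x.
Proof.
rewrite /pcoef /d0 big_filter_cond; apply: eq_bigl => -[c [n y]] /=.
by case: n => //=; rewrite andbb.
Qed.

Lemma pcoef_cat (p q : Defs.poly F G) n x : pcoef (p ++ q) n x = pcoef p n x + pcoef q n x.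
Proof. by rewrite /pcoef big_cat. Qed.

Lemma pcoef_opp (p : Defs.poly F G) n x : pcoef (popp p) n x = - pcoef p n x.
Proof. by rewrite /pcoef big_map sumrN. Qed.

Lemma pcoef1 c u x : pcoef (F:=F) (G:=G) [:: (c, (0%N, u))] 0 x = if u == x then c else 0 :> int.
Proof.
rewrite /pcoef big_cons big_nil /=.
have -> : ((0%N, u) == (0%N, x)) = (u == x) by rewrite xpair_eqE eqxx.
by case: ifP => _; rewrite ?addr0.
Qed.

Lemma rho_d0 (w : seq (F + G)) :
  [/\ d0 (m11 (rho w)) = [:: (1, (0%N, (alphaF w, og_one G)))],
      d0 (m12 (rho w)) = [::], d0 (m21 (rho w)) = [::] &
      d0 (m22 (rho w)) = [:: (1, (0%N, (og_one F, alphaG w)))]].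
Proof.
elim: w => [|l w [H11 H12 H21 H22]] //.
have -> : rho (l :: w) = matmul (rho_letter l) (rho w) by [].
have fd : forall p : Defs.poly F G, [seq a <- p | a.2.1 == 0%N] = d0 p by [].
rewrite /matmul /= /padd; rewrite /d0 !filter_cat !fd !d0_pmul H11 H12 H21 H22.
have e1 : (1 * 1 : int) = 1 by [].
case: l => [f|g] /=; rewrite ?pmul_nil /pmul /one_FG /= e1 !og_mul1 //.
Qed.

Definition rr (u v : Defs.FG F G) (z : FG F G) : int := (u == z)%:R - (v == z)%:R.

Lemma coef11 (y x : seq (F + G)) z :
  pcoef (m11 (matsub (rho y) (rho x))) 0 z =
  rr (alphaF y, og_one G) (alphaF x, og_one G) z.
Proof.
have -> : m11 (matsub (rho y) (rho x)) = m11 (rho y) ++ popp (m11 (rho x)) by [].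
rewrite pcoef_cat pcoef_opp (pcoef_d0 (m11 (rho y))) (pcoef_d0 (m11 (rho x))).
have [-> _ _ _] := rho_d0 y; have [-> _ _ _] := rho_d0 x.
by rewrite !pcoef1 /rr; case: (_ == z); case: (_ == z).
Qed.

Lemma coef22 (y x : seq (F + G)) z :
  pcoef (m22 (matsub (rho y) (rho x))) 0 z =
  rr (og_one F, alphaG y) (og_one F, alphaG x) z.
Proof.
have -> : m22 (matsub (rho y) (rho x)) = m22 (rho y) ++ popp (m22 (rho x)) by [].
rewrite pcoef_cat pcoef_opp (pcoef_d0 (m22 (rho y))) (pcoef_d0 (m22 (rho x))).
have [_ _ _ ->] := rho_d0 y; have [_ _ _ ->] := rho_d0 x.
by rewrite !pcoef1 /rr; case: (_ == z); case: (_ == z).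
Qed.

Lemma Rpos_ext (f g : FG F G -> int) : (forall z, f z = g z) -> R_pos f -> R_pos g.
Proof. move=> E [x [H1 H2]]; exists x; rewrite -E; split=> // y /H2; by rewrite E. Qed.

Lemma Rzero_ext (f g : FG F G -> int) : (forall z, f z = g z) -> R_zero f -> R_zero g.
Proof. by move=> E H z; rewrite -E. Qed.

Lemma rr_pos u v : u != v -> R_pos (rr u v) -> ~~ lexlt u v.
Proof.
move=> uv [x [Hp Hy]].
case: (eqVneq u x) => [ux|ne].
  subst x; apply/negP => luv; have := Hy v luv; rewrite /rr eqxx (negbTE uv) sub0r; move/eqP; rewrite oppr_eq0 pnatr_eq0. by [].
by move: Hp; rewrite /rr (negbTE ne) sub0r; case: (v == x); rewrite ?oppr_gt0 ?ltr01 ?ltxx.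
Qed.

Lemma rr_zero u v : R_zero (rr u v) -> u = v.
Proof.
move=> H; have := H u; rewrite /rr eqxx.
by case: (eqVneq v u) => // _.
Qed.

Lemma rr_pos_eq u : ~ R_pos (rr u u).
Proof. by case=> x []; rewrite /rr subrr. Qed.

Lemma rr_zero_eq u : R_zero (rr u u).
Proof. by move=> z; rewrite /rr subrr. Qed.

Lemma lexlt_total (u v : FG F G) : u != v -> lexlt u v || lexlt v u.
Proof.
case: u v => [u1 u2] [v1 v2] /=; rewrite /lexlt /=.
case: (eqVneq u1 v1) => [->|ne] H.
  rewrite (negbTE (og_ltirr v1)) /=; apply: og_lttot.
  by apply: contra H => /eqP ->.
by have /orP[->|->] := og_lttot ne; rewrite ?orbT.
Qed.

Lemma matpos_info off M u1 v1 u2 v2 :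
  (forall z, pcoef (m11 M) 0 z = rr u1 v1 z) ->
  (forall z, pcoef (m22 M) 0 z = rr u2 v2 z) ->
  @mat_pos F G off M ->
  (u1 != v1 -> ~~ lexlt u1 v1) /\ (u1 = v1 -> u2 != v2 -> ~~ lexlt u2 v2).
Proof.
move=> E1 E2 [[|n] [Hz Hf]].
  rewrite /entries /= in Hf.
  case: Hf => [P1|[Z1 Hf]].
    split=> [ne|e]; first exact: rr_pos ne (Rpos_ext E1 P1).
    by subst; case: (rr_pos_eq (Rpos_ext E1 P1)).
  have e1 := rr_zero (Rzero_ext E1 Z1); subst.
  split=> [|_ ne]; first by rewrite eqxx.
  case: Hf => [P2|[Z2 _]]; first exact: rr_pos ne (Rpos_ext E2 P2).
  by rewrite (rr_zero (Rzero_ext E2 Z2)) eqxx in ne.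
have Z := Hz 0%N isT.
have e1 : u1 = v1 by apply: rr_zero => z; rewrite -E1; case: (Z z).
have e2 : u2 = v2 by apply: rr_zero => z; rewrite -E2; case: (Z z) => _ [_ []].
by subst; rewrite !eqxx.
Qed.

End Aux.

Theorem corollary4p3 (F G : ogroup) (off : bool) :
  convex_in_FP off (@in_ker_alpha F G).
Proof.
move=> c h c' _ _ _ [Fc Gc] [Fc' Gc'] P1 P2.
have [A1 B1] := matpos_info (@coef11 F G h c) (@coef22 F G h c) P1.
have [A2 B2] := matpos_info (@coef11 F G c' h) (@coef22 F G c' h) P2.
rewrite Fc Gc in A1 B1; rewrite Fc' Gc' in A2 B2.
have Ha : alphaF h = og_one F.
  case: (eqVneq (alphaF h) (og_one F)) => // ne.
  have ne' : (alphaF h, og_one G) != (og_one F, og_one G).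
    by apply: contra ne => /eqP [->].
  have := lexlt_total ne'.
  by rewrite (negbTE (A1 ne')) (negbTE (A2 _)) // eq_sym.
split=> //.
case: (eqVneq (alphaG h) (og_one G)) => // ne.
have ne' : (og_one F, alphaG h) != (og_one F, og_one G).
  by apply: contra ne => /eqP [->].
have := lexlt_total ne'.
rewrite Ha in B1 B2 ne'.
by rewrite (negbTE (B1 erefl ne')) (negbTE (B2 erefl _)) // eq_sym.
Qed.
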